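(* For any odd prime $p$ and any non-negative integer $k$, \[ C^{(-k-1)}_{p-1}\equiv 1\pmod p. \]
   Context: For any integer $k$, let $\mathrm{Li}_k(t)=\sum_{n=1}^{\infty} t^n/n^k$. The poly-Bernoulli numbers of type $C$, $C^{(k)}_n$ ($n\ge0$), are defined by $\frac{\mathrm{Li}_k(1-e^{-t})}{e^{t}-1}=\sum_{n=0}^{\infty}C^{(k)}_n\frac{t^n}{n!}$. For negative upper index these are integers. *)

(* Defs.v *)
(* Formal power series over rat as coefficient sequences nat -> rat. *)
From mathcomp Require Import all_boot all_order all_algebra.
Set Implicit Arguments. Unset Strict Implicit. Unset Printing Implicit Defensive.
Import Order.TTheory GRing.Theory Num.Theory.
Local Open Scope ring_scope.

Definition smul (f g : nat -> rat) : nat -> rat :=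
  fun j => \sum_(i < j.+1) f i * g (j - i)%N.

Definition sone : nat -> rat := fun j => (j == 0%N)%:R.

Fixpoint spow (f : nat -> rat) (n : nat) : nat -> rat :=
  if n is n'.+1 then smul f (spow f n') else sone.

(* Coefficients of 1 - e^{-t} = sum_{j>=1} (-1)^(j+1) t^j / j! *)
Definition one_minus_emt : nat -> rat :=
  fun j => if j == 0%N then 0 else (-1) ^+ j.+1 / (j`!)%:R.

(* Coefficients of Li_{-m}(1 - e^{-t}) = sum_{n>=1} n^m (1 - e^{-t})^n.
   Since (1 - e^{-t})^n has order n, only n <= j contribute to t^j. *)
Definition Li_neg_comp (m : nat) : nat -> rat :=
  fun j => \sum_(1 <= n < j.+1) (n%:R) ^+ m * spow one_minus_emt n j.

(* Coefficients of (e^t - 1)/t = sum_{i>=0} t^i/(i+1)! *)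
Definition expm1_div_t (i : nat) : rat := 1 / ((i.+1)`!)%:R.

(* Ordinary coefficients c_0..c_n of Li_{-m}(1-e^{-t}) / (e^t - 1)
   = (Li_{-m}(1-e^{-t})/t) / ((e^t-1)/t), computed by series division:
   c_j = L_{j+1} - sum_{i=1..j} D_i c_{j-i}   (D_0 = 1). *)
Fixpoint polyBernC_coefs (m n : nat) : seq rat :=
  match n with
  | 0 => [:: Li_neg_comp m 1]
  | n'.+1 =>
      let s := polyBernC_coefs m n' in
      rcons s (Li_neg_comp m n'.+2 -
               \sum_(i < n'.+1) expm1_div_t i.+1 * nth 0 s (n' - i)%N)
  end.

(* Poly-Bernoulli numbers of type C with negative upper index -m:
   Li_{-m}(1-e^{-t})/(e^t-1) = sum_n C^{(-m)}_n t^n/n!. *)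
Definition polyBernC_neg (m n : nat) : rat :=
  (n`!)%:R * nth 0 (polyBernC_coefs m n) n.

(* Main.v *)
Require Import Defs.
From mathcomp Require Import all_boot all_order all_algebra all_fingroup all_solvable.
From mathcomp Require Import ring zify.
Set Warnings "-all".
Import Order.TTheory GRing.Theory Num.Theory.
Local Open Scope ring_scope.

Definition ex (a : rat) (j : nat) : rat := a ^+ j / (j`!)%:R.

Lemma fact_neq0 n : (n`!)%:R != 0 :> rat.
Proof. by rewrite pnatr_eq0 -lt0n fact_gt0. Qed.

Lemma ex_mul a b j : smul (ex a) (ex b) j = ex (a + b) j.
Proof.
rewrite /smul /ex addrC exprDn mulr_suml; apply: eq_bigr => [[i]] /=.
rewrite ltnS => hij.
have h := bin_fact hij.
have hf : (j`!)%:R = ('C(j, i))%:R * (i`!)%:R * ((j - i)`!)%:R :> rat.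
  by rewrite -!natrM -mulnA h.
have h1 : ('C(j, i))%:R != 0 :> rat by rewrite pnatr_eq0 -lt0n bin_gt0.
have h2 := fact_neq0 i; have h3 := fact_neq0 (j - i).
move=> _; rewrite hf -[_ *+ 'C(j, i)]mulr_natr.
field.
by rewrite h1 h2 h3.
Qed.

Lemma smul_ext f g1 g2 j : (forall k, g1 k = g2 k) -> smul f g1 j = smul f g2 j.
Proof. by move=> h; rewrite /smul; apply: eq_bigr => i _; rewrite h. Qed.

Lemma smul_subl f g h j :
  smul (fun k => f k - g k) h j = smul f h j - smul g h j.
Proof. by rewrite /smul -sumrB; apply: eq_bigr => i _; rewrite mulrBl. Qed.

Lemma smul_sumr f N (c : nat -> rat) (h : nat -> nat -> rat) j :
  smul f (fun k => \sum_(i < N) c i * h i k) j =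
  \sum_(i < N) c i * smul f (h i) j.
Proof.
rewrite /smul.
under eq_bigr => k _ do rewrite mulr_sumr.
rewrite exchange_big; apply: eq_bigr => i _.
rewrite mulr_sumr; apply: eq_bigr => k _; ring.
Qed.

Definition Fs (s : rat) (q : {poly rat}) (j : nat) : rat :=
  \sum_(i < size q) q`_i * ex (s - i%:R) j.

Lemma Fs_wide s (q : {poly rat}) j N : (size q <= N)%N ->
  Fs s q j = \sum_(i < N) q`_i * ex (s - i%:R) j.
Proof.
move=> hN; rewrite /Fs.
rewrite -(subnKC hN) big_split_ord /= [X in _ = _ + X]big1 ?addr0 //.
by move=> i _; rewrite nth_default ?mul0r // leq_addr.
Qed.

Lemma smul_ex_Fs a s (q : {poly rat}) j : smul (ex a) (Fs s q) j = Fs (s + a) q j.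
Proof.
rewrite /Fs.
rewrite (smul_sumr _ (size q) (fun i => q`_i) (fun i => ex (s - i%:R))); apply: eq_bigr => i _; rewrite ex_mul.
by congr (_ * ex _ _); ring.
Qed.

Lemma Fs_X s (q : {poly rat}) j : Fs (s + 1) ('X * q) j = Fs s q j.
Proof.
rewrite (@Fs_wide _ _ _ ((size q).+1)); last first.
  by rewrite mulrC; have [->|q0] := eqVneq q 0; [rewrite mul0r size_poly0|rewrite size_mulX].
rewrite big_ord_recl coefXM eqxx mul0r add0r /Fs; apply: eq_bigr => i _.
rewrite coefXM /= /bump /=; congr (_ * ex _ _).
by rewrite -natr1 ; ring.
Qed.

Lemma Fs_sub s (q1 q2 : {poly rat}) j : Fs s (q1 - q2) j = Fs s q1 j - Fs s q2 j.
Proof.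
set N := maxn (size q1) (size q2).
rewrite (@Fs_wide _ _ _ N) ?(@Fs_wide _ q1 _ N) ?(@Fs_wide _ q2 _ N).
- by rewrite -sumrB; apply: eq_bigr => i _; rewrite coefB mulrBl.
- by rewrite leq_maxr.
- by rewrite leq_maxl.
- by apply: (leq_trans (size_add _ _)); rewrite size_opp.
Qed.

Lemma E_eq j : one_minus_emt j = ex 0 j - ex (-1) j.
Proof.
rewrite /one_minus_emt /ex; case: j => [|j] /=.
  by rewrite !expr0 subrr.
rewrite expr0n /= mul0r sub0r.
by rewrite [(-1) ^+ j.+2]exprS mulN1r mulNr.
Qed.

Lemma Fs_one j : Fs 0 1 j = sone j.
Proof.
rewrite /Fs size_poly1 big_ord1 coef1 /= mul1r subrr /ex /sone expr0n.
by case: j => [|j] //=; rewrite ?mul0r // divr1.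
Qed.

Lemma smul_E_Fs (q : {poly rat}) j :
  smul one_minus_emt (Fs 0 q) j = Fs 0 ((1 - 'X) * q) j.
Proof.
have -> : smul one_minus_emt (Fs 0 q) j =
          smul (fun k => ex 0 k - ex (-1) k) (Fs 0 q) j.
  by rewrite /smul; apply: eq_bigr => i _; rewrite E_eq.
rewrite smul_subl !smul_ex_Fs mulrBl mul1r Fs_sub sub0r.
by rewrite -(Fs_X (-1)) addNr.
Qed.

Lemma spowE n j : spow one_minus_emt n j = Fs 0 ((1 - 'X) ^+ n) j.
Proof.
elim: n j => [|n IH] j /=; first by rewrite expr0 Fs_one.
by rewrite (smul_ext _ _ _ _ IH) smul_E_Fs exprS.
Qed.

Lemma spow_small n j : (j < n)%N -> spow one_minus_emt n j = 0.
Proof.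
elim: n j => [|n IH] j //= hj.
rewrite /smul big1 // => [[i hi]] _ /=.
case: i hi => [|i] hi; first by rewrite /one_minus_emt /= mul0r.
by rewrite IH ?mulr0 //; rewrite ltnS in hi; lia.
Qed.

Lemma H_spow n j : (0 < n)%N ->
  smul (fun k => ex 1 k - ex 0 k) (Fs 0 ('X * (1 - 'X) ^+ n.-1)) j =
  spow one_minus_emt n j.
Proof.
case: n => [|n] // _ /=.
rewrite smul_subl !smul_ex_Fs add0r addr0 -[X in Fs X _ _ - _]add0r Fs_X.
rewrite -Fs_sub -{1}[(1 - 'X)^+n]mul1r -mulrBl -exprS.
exact: (esym (spowE n.+1 j)).
Qed.

Definition QZ (n : nat) : {poly int} := 'X * (1 - 'X) ^+ n.-1.
Definition TZ (p n : nat) : int :=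
  \sum_(i < size (QZ n)) (QZ n)`_i * (- ((i : nat)%:Z)) ^+ p.-1.
Definition SZ (p m : nat) : int := \sum_(n < p.+1) ((n : nat)%:Z) ^+ m * TZ p n.

Lemma PoszX a k : Posz (a ^ k)%N = (Posz a) ^+ k.
Proof. by elim: k => [|k IH] //; rewrite expnS exprS PoszM IH. Qed.

Lemma fermatZ p i : prime p -> odd p -> (0 < i)%N -> (i < p)%N ->
  (p%:Z %| (- (i%:Z)) ^+ p.-1 - 1)%Z.
Proof.
move=> pp op i0 ip.
have ev : odd p.-1 = false by case: p pp op {ip} => [|q] //= _; case: (odd q).
rewrite exprNn -signr_odd ev expr0 mul1r -PoszX.
have h1 : (1 <= i ^ p.-1)%N by rewrite expn_gt0 i0.
rewrite -[1]/(1%N%:Z) subzn // dvdzE /=.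
rewrite -eqn_mod_dvd // -(totient_prime pp) Euler_exp_totient //.
by rewrite coprime_sym prime_coprime // gtnNdvd.
Qed.

Lemma size_QZ n : (0 < n)%N -> (size (QZ n) <= n.+1)%N.
Proof.
move=> n0; rewrite /QZ.
have h2 : (size (1 - 'X : {poly int})%R <= 2)%N.
  apply: (leq_trans (size_add _ _)).
  by rewrite size_opp size_polyX size_poly1.
have h3 : (size ((1 - 'X : {poly int}) ^+ n.-1)%R <= n)%N.
  apply: (leq_trans (size_poly_exp_leq _ _)).
  have : ((size (1 - 'X : {poly int})%R).-1 <= 1)%N by lia.
  move=> h; have := leq_mul h (leqnn n.-1); rewrite mul1n; lia.
apply: (leq_trans (size_polyMleq _ _)); by rewrite size_polyX add2n /= ltnS.
Qed.

Lemma QZ_horner1 n : (0 < n)%N -> (QZ n).[1] = (n == 1%N)%:R.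
Proof.
move=> n0; rewrite /QZ hornerM hornerX horner_exp hornerD hornerN hornerX hornerC.
rewrite subrr expr0n mul1r; case: n n0 => [|[|n]] //.
Qed.

Lemma key p m n : prime p -> odd p -> (0 < m)%N -> (n <= p)%N ->
  (p%:Z %| (n%:Z) ^+ m * TZ p n - (n == 1%N)%:R)%Z.
Proof.
move=> pp op m0 np.
case: n np => [|n] np.
  by rewrite expr0n; case: m m0 => // m _ /=; rewrite mul0r subr0 dvdz0.
case: (ltnP n.+1 p) => hnp.
  have -> : n.+1%:Z ^+ m * TZ p n.+1 - (n.+1 == 1%N)%:R =
            n.+1%:Z ^+ m * (TZ p n.+1 - (n.+1 == 1%N)%:R).
    case: (n) => [|k] /=; [by rewrite expr1n !mul1r | by rewrite !subr0].
  apply: dvdz_mull.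
  rewrite -QZ_horner1 // horner_coef /TZ -sumrB; apply: rpred_sum => i _.
  rewrite expr1n mulr1 -{2}[(QZ _)`_i]mulr1 -mulrBr.
  case: i => [[|i] hi] /=.
    by rewrite /QZ coefXM eqxx mul0r dvdz0.
  apply: dvdz_mull; apply: fermatZ => //.
  have := @size_QZ n.+1 isT; lia.
have -> : n.+1 = p by lia.
rewrite (_ : (p == 1%N) = false); last by case: p pp {op np hnp} => [|[|q]].
rewrite subr0; apply: dvdz_mulr.
by case: m m0 => // m _; rewrite exprS dvdz_mulr.
Qed.

Lemma SZ_mod p m : prime p -> odd p -> (0 < m)%N ->
  exists z : int, SZ p m = 1 + p%:Z * z.
Proof.
move=> pp op m0.
have hS : (p%:Z %| SZ p m - 1)%Z.
  have -> : (1 : int) = \sum_(n < p.+1) (((n : nat) == 1%N)%:R : int).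
    case: p pp {op} => [|[|q]] // _.
    rewrite big_ord_recl big_ord_recl /= big1 ?add0r ?addr0 //.
  rewrite /SZ -sumrB; apply: rpred_sum => [[n hn]] _ /=.
  by apply: key.
exists ((SZ p m - 1) %/ p%:Z)%Z.
by rewrite mulrC divzK // addrC subrK.
Qed.

Definition cc m j := nth 0 (polyBernC_coefs m j) j.

Lemma coefs_size m n : size (polyBernC_coefs m n) = n.+1.
Proof. by elim: n => [|n IH] //=; rewrite size_rcons IH. Qed.

Lemma coefs_nth m n j : (j <= n)%N -> nth 0 (polyBernC_coefs m n) j = cc m j.
Proof.
elim: n => [|n IH] hj.
  by move: hj; rewrite leqn0 => /eqP ->.
case: (ltngtP j n.+1) hj => // [hlt|->] _ //.
by rewrite /= nth_rcons coefs_size hlt IH.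
Qed.

Lemma cc_rec m j : cc m j.+1 = Li_neg_comp m j.+2 -
  \sum_(i < j.+1) expm1_div_t i.+1 * cc m (j - i)%N.
Proof.
rewrite {1}/cc /= nth_rcons coefs_size ltnn eqxx; congr (_ - _).
by apply: eq_bigr => i _; rewrite coefs_nth // leq_subr.
Qed.

Lemma D0 : expm1_div_t 0 = 1.
Proof. by rewrite /expm1_div_t /= divr1. Qed.

Lemma uniq_g m J (g : nat -> rat) :
  (forall j, (j <= J)%N ->
     \sum_(i < j.+1) expm1_div_t i * g (j - i)%N = Li_neg_comp m j.+1) ->
  forall j, (j <= J)%N -> cc m j = g j.
Proof.
move=> H; elim/ltn_ind => j IH hj.
case: j IH hj => [|j] IH hj.
  have := H 0%N hj; rewrite big_ord1 D0 mul1r subn0 => ->.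
  by rewrite /cc.
have := H j.+1 hj; rewrite big_ord_recl D0 mul1r subn0 => h.
rewrite cc_rec -h; apply/eqP; rewrite subr_eq; apply/eqP; congr (_ + _).
apply: eq_bigr => i _ /=.
rewrite subSS IH //; first by rewrite ltnS leq_subr.
by apply: leq_trans hj; rewrite leqW // leq_subr.
Qed.

Lemma smulD (h : nat -> rat) j :
  \sum_(i < j.+1) expm1_div_t i * h (j - i)%N =
  smul (fun k => ex 1 k - ex 0 k) h j.+1.
Proof.
rewrite /smul [in RHS]big_ord_recl /= /ex !expr0 subrr mul0r add0r.
apply: eq_bigr => i _ /=; rewrite subSS expr1n expr0n /= mul0r subr0.
by rewrite /expm1_div_t.
Qed.

Definition Qr (n : nat) : {poly rat} := 'X * (1 - 'X) ^+ n.-1.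

Definition gB m B j := \sum_(n < B.+1) ((n : nat)%:R) ^+ m * Fs 0 (Qr n) j.

Lemma g_ok m B j : (0 < m)%N -> (j < B)%N ->
  \sum_(i < j.+1) expm1_div_t i * gB m B (j - i)%N = Li_neg_comp m j.+1.
Proof.
move=> m0 jB.
have m0' : (m == 0%N) = false by case: m m0.
rewrite smulD /gB (smul_sumr _ B.+1 (fun n => (n%:R) ^+ m) (fun n => Fs 0 (Qr n))).
set F := fun n : nat => (n%:R : rat) ^+ m * spow one_minus_emt n j.+1.
have -> : \sum_(n < B.+1) (n%:R : rat) ^+ m *
     smul (fun k => ex 1 k - ex 0 k) (Fs 0 (Qr n)) j.+1 = \sum_(n < B.+1) F n.
  apply: eq_bigr => [[[|n] hn]] _ /=.
    by rewrite /F expr0n m0' !mul0r.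
  by rewrite /F /Qr H_spow.
rewrite /Li_neg_comp -/F.
rewrite -(big_mkord xpredT F) (big_cat_nat _ (n := j.+2)) //=.
rewrite [X in _ + X]big1_seq ?addr0; last first.
  move=> n /andP [_]; rewrite mem_index_iota => /andP [hn _].
  by rewrite /F spow_small ?mulr0.
by rewrite big_ltn // /F expr0n m0' mul0r add0r.
Qed.

Lemma Qr_map n : Qr n = map_poly (intr : int -> rat) (QZ n).
Proof.
by rewrite /Qr /QZ rmorphM rmorphXn rmorphB rmorph1 /= map_polyX.
Qed.

Lemma final_val m p :
  (p.-1)`!%:R * gB m p p.-1 = (SZ p m)%:~R :> rat.
Proof.
rewrite /gB /SZ mulr_sumr rmorph_sum; apply: eq_bigr => n _.
rewrite rmorphM rmorphXn /= mulrCA; congr (_ * _).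
rewrite /Fs /TZ Qr_map size_rat_int_poly mulr_sumr rmorph_sum.
apply: eq_bigr => i _; rewrite coef_map /= rmorphM rmorphXn rmorphN /=.
rewrite /ex sub0r.
have := fact_neq0 p.-1; move: (p.-1)`!%:R => f hf.
by field.
Qed.

Theorem theorem3p3 (p k : nat) (hp : prime p) (hodd : odd p) :
  exists z : int, polyBernC_neg k.+1 p.-1 = 1 + (p%:Z * z)%:~R.
Proof.
have [z hz] := @SZ_mod p k.+1 hp hodd (ltn0Sn k).
exists z.
have -> : 1 + (p%:Z * z)%:~R = (SZ p k.+1)%:~R :> rat.
  by rewrite hz rmorphD rmorph1.
have p0 : (0 < p)%N by apply: prime_gt0.
rewrite /polyBernC_neg -/(cc k.+1 p.-1) (@uniq_g k.+1 p.-1 (gB k.+1 p)) //.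
- exact: final_val.
- by move=> j hj; apply: g_ok => //; lia.
Qed.
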